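(* Let $s\geq1$ and consider an explicit $s$-stage Runge–Kutta method in Shu–Osher form with coefficients $a_{i,k}\geq 0$, $b_{i,k}\geq 0$ ($1\leq i\leq s$, $0\leq k\leq i-1$), satisfying $\sum_{k=0}^{i-1}a_{i,k}=1$ for each $i$. Apply it to $dy/dt=T^{(1)}_\lambda(\alpha,\Delta t)\lambda y$, i.e. $y^{(0)}=y^n$, $y^{(i)}=\sum_{k=0}^{i-1}\left(a_{i,k}y^{(k)}+\Delta t\, b_{i,k}T^{(1)}_\lambda(\alpha,\Delta t)\lambda y^{(k)}\right)$ for $i=1,\dots,s$, $y^{n+1}=y^{(s)}$, where $T^{(1)}_\lambda(\alpha,\Delta t)=(1-\alpha\Delta t\lambda)^{-1}$ and $\alpha>0$. If $\alpha\geq 0.5\,\max_{i,k}(b_{i,k}/a_{i,k})$, then the integration is unconditionally stable: $|y^{n+1}|\leq|y^n|$ for every $\Delta t>0$, every $\lambda\in\mathbb{C}$ with $\mathrm{Re}(\lambda)\leq0$, and every $y^n\in\mathbb{C}$.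
   Context: In the maximum, the ratio $b_{i,k}/a_{i,k}$ is understood as $0$ when $b_{i,k}=0$ and as $+\infty$ when $a_{i,k}=0<b_{i,k}$. *)

(* Defs.v *)
From HB Require Import structures.
From mathcomp Require Import all_boot all_order all_algebra.
From mathcomp Require Import reals constructive_ereal.
From mathcomp.real_closed Require Import complex.
Set Implicit Arguments. Unset Strict Implicit. Unset Printing Implicit Defensive.
Import Order.TTheory GRing.Theory Num.Theory.
Local Open Scope ring_scope.
Local Open Scope complex_scope.

(* Ratio b/a with the paper's convention: 0 if b = 0, +oo if a = 0 < b. *)
Definition so_ratio (R : realType) (a b : R) : \bar R :=
  if b == 0 then 0%E else if a == 0 then +oo%E else (b / a)%:E.

Definition so_max_ratio (R : realType) (s : nat) (a b : nat -> nat -> R) : \bar R :=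
  \big[Order.max/-oo%E]_(1 <= i < s.+1) \big[Order.max/-oo%E]_(0 <= k < i)
     so_ratio (a i k) (b i k).

Definition T1 (R : realType) (alpha dt : R) (lam : R[i]) : R[i] :=
  (1 - alpha%:C * dt%:C * lam)^-1.

Fixpoint so_stages (R : realType) (a b : nat -> nat -> R) (alpha dt : R)
    (lam y0 : R[i]) (n : nat) : seq R[i] :=
  match n with
  | 0 => [:: y0]
  | m.+1 =>
      let st := so_stages a b alpha dt lam y0 m in
      rcons st (\sum_(0 <= k < m.+1)
                  ((a m.+1 k)%:C * nth 0 st k
                   + dt%:C * (b m.+1 k)%:C * T1 alpha dt lam * lam * nth 0 st k))
  end.

Definition so_step (R : realType) (s : nat) (a b : nat -> nat -> R) (alpha dt : R)
    (lam yn : R[i]) : R[i] :=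
  nth 0 (so_stages a b alpha dt lam yn s) s.

(* Main.v *)
Require Import Defs.
From HB Require Import structures.
From mathcomp Require Import all_boot all_order all_algebra.
From mathcomp Require Import reals constructive_ereal.
From mathcomp.real_closed Require Import complex.
From mathcomp Require Import ring lra.
Import Order.TTheory GRing.Theory Num.Theory.
Local Open Scope ring_scope.
Local Open Scope complex_scope.
Lemma key (R : realType) (a b alpha dt : R) (lam : R[i]) :
  0 <= a -> 0 <= b -> b <= 2 * a * alpha -> 0 < alpha -> 0 < dt ->
  complex.Re lam <= 0 ->
  `|a%:C + dt%:C * b%:C * T1 alpha dt lam * lam| <= a%:C.
Proof.
move=> a0 b0 hb al0 dt0; case: lam => lx ly /= hlx.
rewrite /T1; set u := (1 - _)%R.
have hu : u = (1 - alpha * dt * lx) +i* (- (alpha * dt * ly)).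
  by rewrite /u; simpc.
have u0 : u != 0.
  rewrite hu eq_complex /= negb_and; apply/orP; left.
  rewrite subr_eq0 eq_sym; apply/negP => /eqP h.
  have : alpha * dt * lx <= 0 by rewrite pmulr_rle0 ?mulr_gt0.
  by rewrite h; lra.
idtac.
have nu : 0 < `|u| by rewrite normr_gt0.
rewrite -(ler_pM2r nu) -normrM.
have -> : (a%:C + dt%:C * b%:C * u^-1 * (lx +i* ly)) * u =
   (a * (1 - alpha * dt * lx) + dt * b * lx) +i* (- (a * alpha * dt * ly) + dt * b * ly).
  have -> : (a%:C + dt%:C * b%:C * u^-1 * (lx +i* ly)) * u =
     a%:C * u + dt%:C * b%:C * (lx +i* ly) by field.
  rewrite hu; simpc. apply/eqP; rewrite eq_complex /=; apply/andP; split; apply/eqP; ring.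
rewrite hu !normc_def /= -rmorphM lecR.
set D := ((1 - alpha * dt * lx) ^+ 2 + (- (alpha * dt * ly)) ^+ 2).
have -> : a * Num.sqrt D = Num.sqrt (a ^+ 2 * D) by rewrite sqrtrM ?sqr_ge0 // sqrtr_sqr ger0_norm.
rewrite ler_sqrt; last first.
  by apply: mulr_ge0; [exact: sqr_ge0| apply: addr_ge0; exact: sqr_ge0].
have hx : dt * lx <= 0 by rewrite pmulr_rle0.
have e : 0 <= a * b * (- (dt * lx)) by apply: mulr_ge0; [exact: mulr_ge0| lra].
have f : 0 <= (2 * a * alpha - b) * b * ((dt*lx)^+2 + (dt*ly)^+2).
  apply: mulr_ge0; [apply: mulr_ge0 => //; lra| apply: addr_ge0; exact: sqr_ge0].
rewrite /D -subr_ge0.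
have -> : a ^+ 2 * ((1 - alpha * dt * lx) ^+ 2 + (- (alpha * dt * ly)) ^+ 2) -
  ((a * (1 - alpha * dt * lx) + dt * b * lx) ^+ 2 +
   (- (a * alpha * dt * ly) + dt * b * ly) ^+ 2) = 2 * (a * b * (- (dt * lx))) + (2 * a * alpha - b) * b * ((dt*lx)^+2 + (dt*ly)^+2) by ring.
lra.
Qed.

Lemma ratio_bound (R : realType) (s : nat) (a b : nat -> nat -> R) (alpha : R) i k :
  (1 <= i <= s)%N -> (k < i)%N -> 0 <= a i k -> 0 <= b i k -> 0 < alpha ->
  ((2^-1 : R)%:E * so_max_ratio s a b <= alpha%:E)%E ->
  b i k <= 2 * a i k * alpha.
Proof.
move=> hi hk a0 b0 al0 hM.
have hr : (so_ratio (a i k) (b i k) <= so_max_ratio s a b)%E.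
  rewrite /so_max_ratio.
  set G := fun i0 => \big[Order.max/-oo%E]_(0 <= k0 < i0) so_ratio (a i0 k0) (b i0 k0).
  have h1 : (G i <= \big[Order.max/-oo%E]_(1 <= i0 < s.+1) G i0)%E.
    apply: (le_bigmax_seq _ i xpredT G) => //.
    by rewrite mem_index_iota; case/andP: hi => -> /=; rewrite ltnS.
  apply: le_trans h1.
  by apply: (le_bigmax_seq _ k xpredT (fun k0 => so_ratio (a i k0) (b i k0))) => //; rewrite mem_index_iota.
have h2 : ((2^-1 : R)%:E * so_ratio (a i k) (b i k) <= alpha%:E)%E.
  apply: le_trans hM; apply: lee_wpmul2l => //; rewrite lee_fin; lra.
move: h2; rewrite /so_ratio.
have [->|bn0] := eqP; first by move=> _; apply: mulr_ge0; [apply: mulr_ge0|]; lra.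
have [->|an0] := eqP.
  by rewrite gt0_muley ?lte_fin //; lra.
rewrite -EFinM lee_fin => h.
have ap : 0 < a i k by rewrite lt_def a0 andbT; apply/eqP.
have : b i k / a i k <= 2 * alpha by lra.
rewrite ler_pdivrMr // => h'; lra.
Qed.

Section Stages.
Variables (R : realType) (a b : nat -> nat -> R) (alpha dt : R) (lam y0 : R[i]).
Let Y k := nth 0 (so_stages a b alpha dt lam y0 k) k.

Lemma size_stages m : size (so_stages a b alpha dt lam y0 m) = m.+1.
Proof. by elim: m => //= m IH; rewrite size_rcons IH. Qed.

Lemma nth_stages m k : (k <= m)%N -> nth 0 (so_stages a b alpha dt lam y0 m) k = Y k.
Proof.
elim: m k => [|m IH] k hk; first by move: hk; rewrite leqn0 => /eqP ->.
rewrite leq_eqVlt in hk; case/orP: hk => [/eqP -> //|hk].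
rewrite /= nth_rcons size_stages hk; exact: IH.
Qed.

Lemma Y_succ m : Y m.+1 = \sum_(0 <= k < m.+1)
   (((a m.+1 k)%:C + dt%:C * (b m.+1 k)%:C * T1 alpha dt lam * lam) * Y k).
Proof.
rewrite /Y /= nth_rcons size_stages ltnn eqxx.
apply: eq_big_nat => k hk.
by rewrite nth_stages ?mulrDl // -ltnS; case/andP: hk.
Qed.

Lemma Y0 : Y 0 = y0. Proof. by []. Qed.
End Stages.

Theorem theorem2 (R : realType) (s : nat) (a b : nat -> nat -> R) (alpha : R) :
  (1 <= s)%N ->
  (forall i k, (1 <= i <= s)%N -> (k < i)%N -> 0 <= a i k) ->
  (forall i k, (1 <= i <= s)%N -> (k < i)%N -> 0 <= b i k) ->
  (forall i, (1 <= i <= s)%N -> \sum_(0 <= k < i) a i k = 1) ->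
  0 < alpha ->
  ((2^-1 : R)%:E * so_max_ratio s a b <= alpha%:E)%E ->
  forall (dt : R) (lam yn : R[i]),
    0 < dt -> complex.Re lam <= 0 ->
    `|so_step s a b alpha dt lam yn| <= `|yn|.
Proof.
move=> s1 ha hb hs al0 hM dt lam yn dt0 hl.
set Y := fun k => nth 0 (so_stages a b alpha dt lam yn k) k.
suff : forall m k, (k <= m)%N -> (m <= s)%N -> `|Y k| <= `|yn|.
  by move/(_ s s (leqnn s) (leqnn s)).
elim=> [|m IH] j hk hm.
  by move: hk; rewrite leqn0 => /eqP ->.
rewrite leq_eqVlt in hk; case/orP: hk => [/eqP ->|hk]; last first.
  by apply: IH => //; apply: ltnW.
have hi : (1 <= m.+1 <= s)%N by rewrite hm.
rewrite /Y Y_succ -/Y.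
apply: (@le_trans _ _ (\sum_(0 <= k < m.+1) (a m.+1 k)%:C * `|yn|)).
  apply: le_trans (ler_norm_sum _ _ _) _.
  apply: ler_sum_nat => k hk'; rewrite normrM.
  have hk2 : (k < m.+1)%N by case/andP: hk'.
  apply: ler_pM => //.
    have hbd := @ratio_bound R s a b alpha _ _ hi hk2 (ha _ _ hi hk2) (hb _ _ hi hk2) al0 hM.
    by apply: key => //; [exact: ha|exact: hb].
  by apply: IH => //; apply: ltnW.
by rewrite -mulr_suml -rmorph_sum hs // mul1r.
Qed.
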